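(* Let $f, g$ be real-valued functions on a Cartesian product $X = \prod_{i\in I} X_i$ whose difference sets $\Delta(f)$ and $\Delta(g)$ are finite. Then there exists $\alpha_0 \in (0, \infty]$, depending on $f$ and $g$, such that $f + \alpha g$ refines $f$ for every real $\alpha$ with $|\alpha| < \alpha_0$.
   Context: Two elements of $X$ are adjacent if they differ in exactly one coordinate. For $f, f'\colon X \to \mathbb{R}$, $f'$ refines $f$ if for all $\vec{x},\vec{x}' \in X$ having all but one coordinate the same, $f(\vec{x}) < f(\vec{x}')$ implies $f'(\vec{x}) < f'(\vec{x}')$. The difference set of $f$ is $\Delta(f) = \{f(\vec{x}') - f(\vec{x}) : \vec{x}, \vec{x}' \text{ adjacent}\}$. *)

(* Defs.v *)
From HB Require Import structures.
From mathcomp Require Import all_boot all_order all_algebra.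
From mathcomp Require Import all_classical all_reals.
From mathcomp Require Import ereal.
Set Implicit Arguments. Unset Strict Implicit. Unset Printing Implicit Defensive.
Import Order.TTheory GRing.Theory Num.Theory.
Local Open Scope ring_scope.
Local Open Scope classical_set_scope.

Definition prodX (I : Type) (X : I -> Type) := forall i : I, X i.

Definition adjacent (I : Type) (X : I -> Type) (x x' : prodX X) : Prop :=
  exists i : I, x i <> x' i /\ forall j : I, j <> i -> x j = x' j.

Definition all_but_one_same (I : Type) (X : I -> Type) (x x' : prodX X) : Prop :=
  exists i : I, forall j : I, j <> i -> x j = x' j.

Definition refines (R : realType) (I : Type) (X : I -> Type)
    (f' f : prodX X -> R) : Prop :=
  forall x x' : prodX X, all_but_one_same x x' -> f x < f x' -> f' x < f' x'.

Definition diff_set (R : realType) (I : Type) (X : I -> Type)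
    (f : prodX X -> R) : set R :=
  [set d | exists x x' : prodX X, adjacent x x' /\ d = f x' - f x].

(* Main.v *)
Require Import Defs.
From mathcomp Require Import all_boot all_order all_algebra.
From mathcomp Require Import all_classical all_reals.
From mathcomp Require Import ereal.
Import Order.TTheory GRing.Theory Num.Theory.
Local Open Scope ring_scope.
Local Open Scope classical_set_scope.

Lemma seq_bound (R : realType) (s : seq R) :
  exists M : R, 0 <= M /\ forall d, d \in s -> `|d| <= M.
Proof.
elim: s => [|a s [M [M0 HM]]]; first by exists 0; split.
exists (Num.max `|a| M); split; first by rewrite le_max M0 orbT.
move=> d; rewrite inE => /orP [/eqP->|/HM H]; first by rewrite le_max lexx.
by rewrite le_max H orbT.
Qed.

Lemma seq_posmin (R : realType) (s : seq R) :
  exists m : R, 0 < m /\ forall d, d \in s -> 0 < d -> m <= d.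
Proof.
elim: s => [|a s [m [m0 Hm]]]; first by exists 1; split.
case: (ltP 0 a) => Ha.
- exists (Num.min a m); split; first by rewrite lt_min Ha m0.
  move=> d; rewrite inE => /orP [/eqP->|/Hm H] d0; first by rewrite ge_min lexx.
  by rewrite ge_min H // orbT.
- exists m; split => // d; rewrite inE => /orP [/eqP-> d0|/Hm //].
  by exfalso; move: (lt_le_trans d0 Ha); rewrite ltxx.
Qed.

Theorem corollary2 (R : realType) (I : Type) (X : I -> Type)
    (f g : prodX X -> R) :
  finite_set (diff_set f) -> finite_set (diff_set g) ->
  exists alpha0 : \bar R, (0 < alpha0)%E /\
    forall alpha : R, (`|alpha|%:E < alpha0)%E ->
      refines (fun x => f x + alpha * g x) f.
Proof.
move=> /finite_seqP [sf Hf] /finite_seqP [sg Hg].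
have [m [m0 Hm]] := @seq_posmin R sf.
have [M [M0 HM]] := @seq_bound R sg.
have M1 : 0 < M + 1 by rewrite ltr_wpDl.
exists (m / (M + 1))%:E; split; first by rewrite lte_fin divr_gt0.
move=> a; rewrite lte_fin => Ha x x' [i Hi] Hlt.
have adj : adjacent x x'.
  exists i; split => // Heq.
  have exx : x = x'.
    apply: boolp.functional_extensionality_dep => j.
    by case: (boolp.pselect (j = i)) => [->|/Hi].
  by move: Hlt; rewrite exx ltxx.
have df : (f x' - f x) \in sf.
  have : diff_set f (f x' - f x) by exists x, x'.
  by rewrite Hf.
have dg : (g x' - g x) \in sg.
  have : diff_set g (g x' - g x) by exists x, x'.
  by rewrite Hg.
have Hmf := Hm _ df (ltac:(by rewrite subr_gt0)).
have Hmg := HM _ dg.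
have key : `|a * (g x' - g x)| < m.
  rewrite normrM.
  have : `|a| * `|g x' - g x| <= `|a| * (M + 1).
    apply: ler_wpM2l => //; apply: (le_trans Hmg); rewrite lerDl //.
  move/le_lt_trans; apply.
  by rewrite -ltr_pdivlMr.
have := ler_norm (- (a * (g x' - g x))); rewrite normrN => H2.
have H3 : - (a * (g x' - g x)) < f x' - f x by apply: (le_lt_trans H2); apply: (lt_le_trans key).
have -> : f x + a * g x < f x' + a * g x' = (- (a * (g x' - g x)) < f x' - f x).
  by rewrite mulrBr opprB ltrBrDl addrA ltrBlDr addrC [_ + f x]addrC.
exact: H3.
Qed.
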